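(* Let a countable group $G$ act freely and continuously on a zero-dimensional Polish space $X$. Let $E$ be a finite $G$-clopen equivalence relation on $X$ and suppose there is a finite set $K\subseteq G$ with $[x]_E\subseteq K\cdot x$ for all $x\in X$. Then there is a continuous, $G$-clopen function $S:X\to X$ (a selector for $E$) such that for all $x,y\in X$, $x\mathrel{E}S(x)$, and $x\mathrel{E}y\iff S(x)=S(y)$.
   Context: A relation $R\subseteq X\times X$ (in particular the graph $\{(x,S(x))\}$ of a function $S$) is $G$-clopen if for every $g\in G$ the set $\{x\in X:(x,g\cdot x)\in R\}$ is clopen. $E$ is finite if each class $[x]_E$ is finite. *)

(* Defs.v *)
From HB Require Import structures.
From mathcomp Require Import all_boot all_order all_algebra.
From mathcomp Require Import monoid.
From mathcomp Require Import all_classical all_reals all_analysis.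

Set Implicit Arguments.
Unset Strict Implicit.
Unset Printing Implicit Defensive.

Local Open Scope classical_set_scope.

(* Zero-dimensional: the topology has a basis of clopen sets. *)
Definition clopen_basis (T : topologicalType) : Prop :=
  forall (U : set T) (x : T), open U -> U x ->
    exists V : set T, [/\ clopen V, V x & V `<=` U].

(* Polish: X carries a complete (pseudo)metric inducing its topology
   (encoded by X : completePseudoMetricType R), is Hausdorff (so the
   pseudometric is a metric), and is separable. *)
Definition separable_space (T : topologicalType) : Prop :=
  exists D : set T, countable D /\ dense D.

Definition is_group_action (G : groupType) (X : Type) (act : G -> X -> X) : Prop :=
  (forall x, act 1%g x = x) /\
  (forall g h x, act (g * h)%g x = act g (act h x)).

Definition free_action (G : groupType) (X : Type) (act : G -> X -> X) : Prop :=
  forall g x, act g x = x -> g = 1%g.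

Definition G_clopen (G : groupType) (X : topologicalType)
  (act : G -> X -> X) (R : X -> X -> Prop) : Prop :=
  forall g : G, clopen [set x | R x (act g x)].

Definition equiv_relP (X : Type) (E : X -> X -> Prop) : Prop :=
  [/\ forall x, E x x,
      forall x y, E x y -> E y x &
      forall x y z, E x y -> E y z -> E x z].

Definition finite_classes (X : Type) (E : X -> X -> Prop) : Prop :=
  forall x, finite_set [set y | E x y].

(* Main.v *)
Require Import Defs.
From HB Require Import structures.
From mathcomp Require Import all_boot all_order all_algebra.
From mathcomp Require Import monoid.
From mathcomp Require Import all_classical all_reals all_analysis.
From mathcomp Require Import lra.

Local Open Scope classical_set_scope.
Set Implicit Arguments.
Unset Strict Implicit.

Lemma near_all_finite (T I : Type) (F : set_system T) (FF : Filter F)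
  (A : set I) (P : I -> T -> Prop) :
  finite_set A -> (forall a, A a -> \forall x \near F, P a x) ->
  \forall x \near F, forall a, A a -> P a x.
Proof.
case/finite_setP=> n; elim: n A => [A|n ih A /eq_cardSP[a0 Aa0 /ih {}ih]].
  by rewrite II0 card_eq0 => /eqP -> _; apply: filterE => x a.
move=> H.
have h1 := ih (fun a Aa => H a (proj1 Aa)).
apply: filterS2 h1 (H a0 Aa0) => x h1x h2x a Aa.
have [->//|ne] := pselect (a = a0).
by apply: h1x; split.
Qed.

Definition ismin (T : Type) (lt : T -> T -> Prop) (A : set T) m :=
  A m /\ forall y, A y -> y = m \/ lt m y.

Lemma min_exists (T : Type) (lt : T -> T -> Prop) (A : set T) :
  (forall x y z, lt x y -> lt y z -> lt x z) ->
  (forall x y, x <> y -> lt x y \/ lt y x) ->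
  finite_set A -> A !=set0 -> exists m, ismin lt A m.
Proof.
move=> tr to /finite_setP[n]; elim: n A => [A|n ih A /eq_cardSP[a0 Aa0 cA]].
  by rewrite II0 card_eq0 => /eqP -> [].
move=> _; have [ne|e] := pselect ((A `\ a0) !=set0).
- have [m [[Am mna] mmin]] := ih _ cA ne.
  have mne : m <> a0 by move=> E; apply: mna; rewrite E.
  case: (to _ _ mne) => h.
  + exists m; split => // y Ay; have [->|yne] := pselect (y = a0); first by right.
    by apply: mmin; split.
  + exists a0; split => // y Ay; have [->|yne] := pselect (y = a0); first by left.
    case: (mmin y) => [|->|]; [by split| by right|]; by move=> h2; right; apply: tr h2.
- exists a0; split => // y Ay; have [->|yne] := pselect (y = a0); first by left.
  by exfalso; apply: e; exists y; split.
Qed.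

Lemma min_unique (T : Type) (lt : T -> T -> Prop) (A : set T) m m' :
  (forall x y z, lt x y -> lt y z -> lt x z) -> (forall x, ~ lt x x) ->
  ismin lt A m -> ismin lt A m' -> m = m'.
Proof.
move=> tr irr [Am hm] [Am' hm'].
case: (hm _ Am') => [->//|h1]; case: (hm' _ Am) => [->//|h2].
by exfalso; apply: (irr m); apply: tr h1 h2.
Qed.

Lemma near_clopen (T : topologicalType) (A : set T) x :
  clopen A -> \forall x' \near x, A x' <-> A x.
Proof.
move=> [oA cA]; have [h|h] := pselect (A x).
  have : nbhs x A by exact: (@open_nbhs_nbhs T x A (conj oA h)).
  by apply: filterS => y Ay.
have : nbhs x (~` A) by apply: (@open_nbhs_nbhs T x); split => //; rewrite openC.
by apply: filterS => y Ay; split.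
Qed.

Lemma near_clopen_comp (T U : topologicalType) (f : T -> U) (A : set U) x :
  continuous f -> clopen A -> \forall x' \near x, A (f x') <-> A (f x).
Proof. by move=> hf cA; have := near_clopen (f x) cA; move/(hf x). Qed.

Definition lexlt (X : Type) (C : nat -> set X) (y z : X) :=
  exists i, [/\ C i y, ~ C i z & forall j, (j < i)%N -> (C j y <-> C j z)].

Lemma lexlt_irr (X : Type) (C : nat -> set X) y : ~ lexlt C y y.
Proof. by case=> i []. Qed.

Lemma lexlt_trans (X : Type) (C : nat -> set X) y z w :
  lexlt C y z -> lexlt C z w -> lexlt C y w.
Proof.
move=> [i [Ciy Ciz hi]] [j [Cjz Cjw hj]].
have [ij|ji|e] := ltngtP i j.
- exists i; split => //; first by move=> h; apply: Ciz; apply/(hj i ij).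
  by move=> k ki; rewrite (hi k ki); apply: hj; apply: ltn_trans ki ij.
- exists j; split => //; first by apply/(hi j ji).
  by move=> k kj; rewrite (hi k (ltn_trans kj ji)); apply: hj.
- by subst j.
Qed.

Lemma lexlt_total (X : Type) (C : nat -> set X) :
  (forall y z, y <> z -> exists i, C i y /\ ~ C i z) ->
  forall y z, y <> z -> lexlt C y z \/ lexlt C z y.
Proof.
move=> sep y z yz.
pose P i := `[< ~ (C i y <-> C i z) >].
have exP : exists i, P i.
  have [i [h1 h2]] := sep y z yz; exists i; apply/asboolP => h.
  by apply: h2; apply/h.
case: (ex_minnP exP) => i /asboolP Pi mini.
have low : forall j, (j < i)%N -> (C j y <-> C j z).
  move=> j ji; apply: contrapT => nj.
  have := mini j (asboolT nj); rewrite leqNgt ji //.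
have [Cy|nCy] := pselect (C i y).
  left; exists i; split => // Cz; by apply: Pi.
right; exists i; split => //.
  by apply: contrapT => nCz; apply: Pi; split.
by move=> j ji; split => /(low j ji).
Qed.

Lemma near_lexlt (T X : topologicalType) (C : nat -> set X) (f g : T -> X) x :
  (forall i, clopen (C i)) -> continuous f -> continuous g ->
  lexlt C (f x) (g x) -> \forall x' \near x, lexlt C (f x') (g x').
Proof.
move=> cC cf cg [i [Cf Cg hi]].
have H : \forall x' \near x, forall j, `I_i.+1 j ->
    (C j (f x') <-> C j (f x)) /\ (C j (g x') <-> C j (g x)).
  apply: near_all_finite => // j _.
  by apply: filterS2 (near_clopen_comp x cf (cC j)) (near_clopen_comp x cg (cC j)).
apply: filterS H => x' H; exists i; split.
- by apply/(proj1 (H i (ltnSn i))).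
- by move/(proj1 (proj2 (H i (ltnSn i)))).
- move=> j ji; have [h1 h2] := H j (ltn_trans ji (ltnSn i)).
  by rewrite h1 h2; apply: hi.
Qed.

Section sep.
Import Order.TTheory GRing.Theory Num.Theory.
Local Open Scope ring_scope.

Lemma small_ball (R : realType) (X : pseudoMetricType R) (p : X) U :
  nbhs p U -> exists n : nat, forall d, ball p (n.+1%:R^-1) d ->
    ball d (n.+1%:R^-1) `<=` U /\ ball d (n.+1%:R^-1) p.
Proof.
move=> /nbhs_ballP [e /= e0 sU].
have [|k] := @ltr_add_invr R 0%R (e/2) _; first by lra.
rewrite add0r => ke; exists k => d pd; split; last exact: ball_sym.
move=> w dw; apply: sU; apply: (le_ball (e1 := k.+1%:R^-1 + k.+1%:R^-1)).
  set q := k.+1%:R^-1 in ke *. lra.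
exact: ball_triangle pd dw.
Qed.

Lemma dense_ball (R : realType) (X : pseudoMetricType R) (D : set X) (p : X) (n : nat) :
  dense D -> exists d, D d /\ ball p (n.+1%:R^-1) d.
Proof.
move=> dD; have hn : (0:R) < n.+1%:R^-1 by [].
have [ho1 ho2] := open_nbhs_ball p (PosNum hn).
have [d [d1 d2]] := dD _ (ex_intro _ p ho2) ho1.
by exists d; split => //; apply: interior_subset.
Qed.

Lemma sep_family (R : realType) (X : pseudoMetricType R) :
  hausdorff_space X -> separable_space X -> clopen_basis X ->
  exists C : nat -> set X, (forall i, clopen (C i)) /\
    (forall y z, y <> z -> exists i, C i y /\ ~ C i z).
Proof.
move=> hX [D [cD dD]] cb.
have [[x0 _]|nX] := pselect (exists x : X, True); last first.
  exists (fun _ => set0); split => [i|y]; first exact: clopen0.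
  by exfalso; apply: nX; exists y.
move/countable_injP: cD => [f finj].
pose r (n : nat) : R := n.+1%:R^-1.
pose Q (t : nat * nat * nat * nat) (W : set X) :=
  exists d e, [/\ D d, D e, f d = t.1.1.1, f e = t.1.1.2 &
     ball d (r t.1.2) `<=` W /\ W `&` ball e (r t.2) = set0].
have : forall t, exists W, clopen W /\ ((exists W', clopen W' /\ Q t W') -> Q t W).
  move=> t; have [[W [cW QW]]|nQ] := pselect (exists W', clopen W' /\ Q t W').
    by exists W.
  by exists set0; split; [exact: clopen0 | move=> h; exfalso; apply: nQ].
case/choice => Cf hCf.
exists (fun i => if unpickle i is Some t then Cf t else set0); split.
  by move=> i; case: (unpickle i) => [t|]; [exact: (hCf t).1 | exact: clopen0].
move=> y z yz.
have [A [oA Ay Az]] := hausdorff_accessible hX (introN eqP yz).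
have [V [cV Vy VA]] := cb A y oA (set_mem Ay).
have Vz : ~ V z by move=> /VA; move: Az; rewrite inE.
have nVy : nbhs y V by apply: (@open_nbhs_nbhs X y V); split => //; case: cV.
have nVz : nbhs z (~` V).
  by apply: (@open_nbhs_nbhs X z); split => //; rewrite openC; case: cV.
have [n hn] := small_ball nVy; have [d [Dd yd]] := dense_ball y n dD.
have [m hm] := small_ball nVz; have [e [De ze]] := dense_ball z m dD.
have [dV dy] := hn d yd; have [eV ez] := hm e ze.
pose t := (f d, f e, n, m).
have Qt : Q t (Cf t).
  apply: (hCf t).2; exists V; split => //; exists d, e; split => //; split => //.
  by apply/seteqP; split => // w [Vw /eV].
have [d' [e' [Dd' De' fd fe [dC Ce]]]] := Qt.
have dd : d' = d by apply: finj; rewrite ?inE.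
have ee : e' = e by apply: finj; rewrite ?inE.
subst d' e'.
exists (pickle t); rewrite pickleK; split; first exact: dC.
move=> Cz; have : (Cf t `&` ball e (r m)) z by [].
by rewrite Ce.
Qed.

End sep.

Lemma act_inj (G : groupType) (X : Type) (act : G -> X -> X) :
  is_group_action act -> free_action act ->
  forall a b x, act a x = act b x -> a = b.
Proof.
move=> [a1 aM] fr a b x e.
have : act (b^-1 * a)%g x = x by rewrite aM e -aM mulVg a1.
by move/fr => h; rewrite -(mulVKg b a) h mulg1.
Qed.

Unset Implicit Arguments.
Set Strict Implicit.

Theorem lemma3p6 (G : groupType) (R : realType) (X : completePseudoMetricType R)
  (act : G -> X -> X) (E : X -> X -> Prop) (K : set G) :
  countable [set: G] ->
  hausdorff_space X -> separable_space X -> clopen_basis X ->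
  is_group_action act -> free_action act ->
  (forall g : G, continuous (act g)) ->
  equiv_relP E -> finite_classes E -> G_clopen act E ->
  finite_set K ->
  (forall x y : X, E x y -> exists2 k : G, K k & y = act k x) ->
  exists S : X -> X,
    [/\ continuous S,
        G_clopen act (fun x y => y = S x),
        forall x : X, E x (S x) &
        forall x y : X, E x y <-> S x = S y].
Proof.
move=> _ hX sX cb ga fr hc [Er Es Et] finE gcE finK hK.
have [C [cC sepC]] := sep_family hX sX cb.
pose lt := lexlt C.
have tr : forall x y z, lt x y -> lt y z -> lt x z by move=> *; apply: lexlt_trans; eauto.
have irr : forall x, ~ lt x x by move=> x; apply: lexlt_irr.
have to := lexlt_total sepC.
have minex : forall x, exists m, ismin lt (E x) m.
  by move=> x; apply: min_exists => //; [exact: finE | exists x; apply: Er].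
pose S x := projT1 (cid (minex x)).
have Smin : forall x, ismin lt (E x) (S x) by move=> x; exact: (projT2 (cid (minex x))).
have ES : forall x, E x (S x) by move=> x; case: (Smin x).
have inj := act_inj ga fr.
have loc : forall x, exists k, S x = act k x /\ \forall x' \near x, S x' = act k x'.
  move=> x; have [k Kk Sk] := hK _ _ (ES x); exists k; split => //.
  have ha : \forall x' \near x, E x' (act k x').
    apply: filterS (near_clopen x (gcE k)) => x' /= h; apply/h; rewrite -Sk.
    exact: ES.
  have hb : \forall x' \near x, forall k', K k' -> E x' (act k' x') ->
      act k' x' = act k x' \/ lt (act k x') (act k' x').
    apply: near_all_finite => // k' Kk'.
    have [Ek'|nEk'] := pselect (E x (act k' x)).
      case: (proj2 (Smin x) _ Ek') => [e|h].
        have kk : k' = k by apply: (inj _ _ x); rewrite e.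
        by subst k'; apply: filterE => x' _; left.
      rewrite Sk in h.
      by apply: filterS (near_lexlt cC (hc k) (hc k') h) => x' h' _; right.
    apply: filterS (near_clopen x (gcE k')) => x' /= h Ex'.
    by exfalso; apply: nEk'; apply/h.
  apply: filterS2 ha hb => x' ha hb.
  apply: (min_unique tr irr (Smin x')); split => // y Exy.
  have [k' Kk' yk] := hK _ _ Exy.
  by rewrite yk; apply: hb => //; rewrite -yk.
exists S; split.
- move=> x; have [k [Sx nS]] := loc x; rewrite /continuous_at Sx.
  apply: cvg_trans (hc k x).
  by apply: near_eq_cvg; apply: filterS nS => x' ->.
- move=> g; split.
  + rewrite openE => x /= Ax; rewrite /interior.
    have [k [Sx nS]] := loc x.
    have gk : g = k by apply: (inj _ _ x); rewrite Ax.
    by subst g; apply: filterS nS => x' e; rewrite /= e.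
  + rewrite -openC openE => x /= Ax; rewrite /interior.
    have [k [Sx nS]] := loc x.
    apply: filterS nS => x' Sx' /= e; apply: Ax.
    have gk : g = k by apply: (inj _ _ x'); rewrite e.
    by subst g.
- exact: ES.
- move=> x y; split => [Exy|SS].
    apply: (min_unique tr irr _ (Smin y)); split.
      by apply: Et (Es _ _ Exy) (ES x).
    move=> z Eyz; apply: (proj2 (Smin x)); exact: Et Exy Eyz.
  by apply: Et (ES x) _; rewrite SS; apply: Es; apply: ES.
Qed.
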